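(* Let $b_+,b_->0$, $\delta_+,\delta_-\in\mathbb{R}$ with $b_\pm+\delta_\pm>0$, $\delta_+\neq0$, $\delta_-\neq 0$, and $c>0$. Let $\hat H_{\mathrm I}(0)$ be the type-I interface Hamiltonian at quasi-momentum $k=0$ (defined in the context). Then $0$ is a two-fold eigenvalue of $\hat H_{\mathrm I}(0)$ (i.e. $0$ is an eigenvalue whose eigenspace in $\ell^2(\mathbb{Z};\mathbb{C}^6)$ is two-dimensional) if and only if $$(b_++\delta_+)(b_-+\delta_-)\,f_1(b_+,\delta_+)\,f_1(b_-,\delta_-)=c^2 .$$
   Context: Coefficients: for $n\in\mathbb Z$ let $b_n=b_+$ for $n\ge0$ and $b_n=b_-$ for $n\le -1$; $c_n=b_++\delta_+$ for $n\ge 0$, $c_{-1}=c$, $c_n=b_-+\delta_-$ for $n\le-2$; $d_n=b_++\delta_+$ for $n\ge0$, $d_n=b_-+\delta_-$ for $n\le -1$. For $k\in[-\pi,\pi)$, $\hat H_{\mathrm I}(k)$ is the bounded self-adjoint operator on $\ell^2(\mathbb Z;\mathbb C^6)$ acting on $u=\{(u_{j,n})_{j=1}^6\}_{n\in\mathbb Z}$ by $(\hat H_{\mathrm I}(k)u)_{1,n}=-b_nu_{4,n}-b_nu_{5,n}-c_{n-1}e^{-ik}u_{6,n-1}$, $(\hat H_{\mathrm I}(k)u)_{2,n}=-b_nu_{4,n}-d_ne^{ik}u_{5,n}-b_nu_{6,n}$, $(\hat H_{\mathrm I}(k)u)_{3,n}=-c_nu_{4,n+1}-b_nu_{5,n}-b_nu_{6,n}$,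 $(\hat H_{\mathrm I}(k)u)_{4,n}=-b_nu_{1,n}-b_nu_{2,n}-c_{n-1}u_{3,n-1}$, $(\hat H_{\mathrm I}(k)u)_{5,n}=-b_nu_{1,n}-d_ne^{-ik}u_{2,n}-b_nu_{3,n}$, $(\hat H_{\mathrm I}(k)u)_{6,n}=-c_ne^{ik}u_{1,n+1}-b_nu_{2,n}-b_nu_{3,n}$. For $b>0$, $\varepsilon>-b$, $\varepsilon\ne0$, put $t=(b+\varepsilon)/b$ and $\alpha=-t^2+2t-\frac4t+\frac4{t^2}$, $\beta=-t^3+t^2+t-3+\frac2t$, $\gamma=t^4-t^2+2t-1$, and $$f_1(b,\varepsilon)=\frac{-\alpha+\gamma-\sqrt{(\alpha-\gamma)^2-4\beta^2}}{2\beta}.$$ *)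

(* Defs.v *)
From Stdlib Require Import Reals ZArith Lra.
From Coquelicot Require Import Coquelicot.
Open Scope R_scope.

Inductive comp6 := j1 | j2 | j3 | j4 | j5 | j6.

Definition seq6 := Z -> comp6 -> C.

Definition in_l2 (u : seq6) : Prop :=
  forall j : comp6,
    ex_series (fun n : nat => (Cmod (u (Z.of_nat n) j)) ^ 2) /\
    ex_series (fun n : nat => (Cmod (u (- Z.of_nat n - 1)%Z j)) ^ 2).

Definition coef_b (bp bm : R) (n : Z) : R := if (0 <=? n)%Z then bp else bm.
Definition coef_c (bp bm dp dm c : R) (n : Z) : R :=
  if (0 <=? n)%Z then bp + dp else if (n =? -1)%Z then c else bm + dm.
Definition coef_d (bp bm dp dm : R) (n : Z) : R :=
  if (0 <=? n)%Z then bp + dp else bm + dm.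

Definition eik (k : R) : C := (cos k, sin k).
Definition emik (k : R) : C := (cos k, - sin k).

Definition H_I (bp bm dp dm c k : R) (u : seq6) : seq6 :=
  fun n j =>
  let b := coef_b bp bm in
  let cc := coef_c bp bm dp dm c in
  let d := coef_d bp bm dp dm in
  match j with
  | j1 => Copp (Cplus (Cplus (Cmult (b n) (u n j4)) (Cmult (b n) (u n j5)))
                      (Cmult (Cmult (cc (n - 1)%Z) (emik k)) (u (n - 1)%Z j6)))
  | j2 => Copp (Cplus (Cplus (Cmult (b n) (u n j4)) (Cmult (Cmult (d n) (eik k)) (u n j5)))
                      (Cmult (b n) (u n j6)))
  | j3 => Copp (Cplus (Cplus (Cmult (cc n) (u (n + 1)%Z j4)) (Cmult (b n) (u n j5)))
                      (Cmult (b n) (u n j6)))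
  | j4 => Copp (Cplus (Cplus (Cmult (b n) (u n j1)) (Cmult (b n) (u n j2)))
                      (Cmult (cc (n - 1)%Z) (u (n - 1)%Z j3)))
  | j5 => Copp (Cplus (Cplus (Cmult (b n) (u n j1)) (Cmult (Cmult (d n) (emik k)) (u n j2)))
                      (Cmult (b n) (u n j3)))
  | j6 => Copp (Cplus (Cplus (Cmult (Cmult (cc n) (eik k)) (u (n + 1)%Z j1)) (Cmult (b n) (u n j2)))
                      (Cmult (b n) (u n j3)))
  end.

Definition eigvec (A : seq6 -> seq6) (lam : C) (u : seq6) : Prop :=
  in_l2 u /\ forall n j, A u n j = Cmult lam (u n j).

Definition lincomb2 (a b : C) (u v : seq6) : seq6 :=
  fun n j => Cplus (Cmult a (u n j)) (Cmult b (v n j)).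

Definition twofold_eigenvalue (A : seq6 -> seq6) (lam : C) : Prop :=
  exists u v : seq6,
    eigvec A lam u /\ eigvec A lam v /\
    (forall a b : C, (forall n j, lincomb2 a b u v n j = 0%C) -> a = 0%C /\ b = 0%C) /\
    (forall w : seq6, eigvec A lam w -> exists a b : C, forall n j, w n j = lincomb2 a b u v n j).

Definition f1 (b eps : R) : R :=
  let t := (b + eps) / b in
  let alpha := - t ^ 2 + 2 * t - 4 / t + 4 / t ^ 2 in
  let beta := - t ^ 3 + t ^ 2 + t - 3 + 2 / t in
  let gamma := t ^ 4 - t ^ 2 + 2 * t - 1 in
  (- alpha + gamma - sqrt ((alpha - gamma) ^ 2 - 4 * beta ^ 2)) / (2 * beta).

(* Main.v *)
Require Import Defs.
From Stdlib Require Import Reals.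
From Coquelicot Require Import Coquelicot.
From Stdlib Require Import Lra Lia ZArith Psatz.
Open Scope R_scope.


Definition Tf (t : R) : R := t ^ 2 - 1 + 2 / t.
Definition lam (t : R) : R := (Tf t + sqrt (Tf t ^ 2 - 4)) / 2.
Definition gf (t : R) : R := (lam t - t ^ 2) / (t - 1).

Lemma Tf_gt2 t : 0 < t -> t <> 1 -> 2 < Tf t.
Proof.
  intros Ht H1.
  assert (E : Tf t - 2 = (t - 1) ^ 2 * (t + 2) / t) by (unfold Tf; field; lra).
  assert (0 < (t - 1) ^ 2) by (apply pow_lt_0 ; lra) || (assert (t - 1 <> 0) by lra; nra).
  assert (0 < (t - 1) ^ 2 * (t + 2) / t).
  { apply Rdiv_lt_0_compat; [apply Rmult_lt_0_compat|]; lra. }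
  lra.
Qed.

Lemma sqrt_T_sq t : 0 < t -> t <> 1 -> sqrt (Tf t ^ 2 - 4) ^ 2 = Tf t ^ 2 - 4.
Proof.
  intros. pose proof (Tf_gt2 t H H0).
  rewrite <- Rsqr_pow2. apply Rsqr_sqrt. nra.
Qed.

Lemma lam_root t : 0 < t -> t <> 1 -> lam t ^ 2 - Tf t * lam t + 1 = 0.
Proof.
  intros. pose proof (sqrt_T_sq t H H0). unfold lam.
  set (S := sqrt (Tf t ^ 2 - 4)) in *. nra.
Qed.

Lemma lam_gt1 t : 0 < t -> t <> 1 -> 1 < lam t.
Proof.
  intros. pose proof (Tf_gt2 t H H0). unfold lam.
  pose proof (sqrt_pos (Tf t ^ 2 - 4)). lra.
Qed.

Lemma ilam_root t : 0 < t -> t <> 1 -> (/ lam t) ^ 2 - Tf t * (/ lam t) + 1 = 0.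
Proof.
  intros. pose proof (lam_root t H H0). pose proof (lam_gt1 t H H0).
  set (l := lam t) in *.
  replace ((/ l) ^ 2 - Tf t * / l + 1) with ((l ^ 2 - Tf t * l + 1) / l ^ 2) by (field; lra).
  rewrite H1. field. lra.
Qed.

Lemma key_id t : 0 < t -> t <> 1 -> (t ^ 2 - lam t) * (t ^ 2 - / lam t) = (t - 1) ^ 2.
Proof.
  intros. pose proof (lam_root t H H0). pose proof (lam_gt1 t H H0).
  set (l := lam t) in *.
  replace ((t ^ 2 - l) * (t ^ 2 - / l)) with ((t^4 * l - t^2 * (l^2+1) + l) / l) by (field; lra).
  replace (l ^ 2 + 1) with (Tf t * l) by lra. unfold Tf. field. lra.
Qed.

Lemma f1_eq b d : 0 < b -> 0 < b + d -> d <> 0 -> f1 b d = gf ((b + d) / b).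
Proof.
  intros Hb Hbd Hd. unfold f1, gf. cbv zeta.
  set (t := (b + d) / b).
  assert (Ht : 0 < t) by (unfold t; apply Rdiv_lt_0_compat; lra).
  assert (Ht1 : t <> 1).
  { unfold t; intro E. apply Hd. apply (Rmult_eq_compat_r b) in E.
    unfold Rdiv in E. rewrite Rmult_assoc, Rinv_l in E by lra. lra. }
  set (k := (t ^ 3 - t + 2) / t).
  assert (Hk : 0 < k).
  { unfold k. apply Rdiv_lt_0_compat; auto.
    destruct (Rle_lt_dec t 1).
    - assert (t ^ 3 >= 0) by (apply Rle_ge, pow_le; lra). nra.
    - nra. }
  assert (ED : (- t ^ 2 + 2 * t - 4 / t + 4 / t ^ 2 - (t ^ 4 - t ^ 2 + 2 * t - 1)) ^ 2 -
      4 * (- t ^ 3 + t ^ 2 + t - 3 + 2 / t) ^ 2 = k ^ 2 * (Tf t ^ 2 - 4)).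
  { unfold k, Tf. field. lra. }
  rewrite ED. rewrite sqrt_mult by (try (apply pow2_ge_0); pose proof (Tf_gt2 t Ht Ht1); nra).
  rewrite sqrt_pow2 by lra.
  unfold lam. set (S := sqrt (Tf t ^ 2 - 4)).
  assert (t - 1 <> 0) by lra.
  assert (Eb : - t ^ 3 + t ^ 2 + t - 3 + 2 / t = - (t - 1) * k) by (unfold k; field; lra).
  rewrite Eb.
  assert (Eg : - (- t ^ 2 + 2 * t - 4 / t + 4 / t ^ 2) + (t ^ 4 - t ^ 2 + 2 * t - 1) = k * (2 * t ^ 2 - Tf t)) by (unfold k, Tf; field; lra).
  rewrite Eg. field. split; lra.
Qed.


Section Coefs.
Variables bp bm dp dm c : R.
Lemma cb_pos n : (0 <= n)%Z -> coef_b bp bm n = bp.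
Proof. intros; unfold coef_b; rewrite (proj2 (Z.leb_le _ _) H); auto. Qed.
Lemma cb_neg n : (n < 0)%Z -> coef_b bp bm n = bm.
Proof. intros; unfold coef_b; rewrite (proj2 (Z.leb_gt _ _) H); auto. Qed.
Lemma cd_pos n : (0 <= n)%Z -> coef_d bp bm dp dm n = bp + dp.
Proof. intros; unfold coef_d; rewrite (proj2 (Z.leb_le _ _) H); auto. Qed.
Lemma cd_neg n : (n < 0)%Z -> coef_d bp bm dp dm n = bm + dm.
Proof. intros; unfold coef_d; rewrite (proj2 (Z.leb_gt _ _) H); auto. Qed.
Lemma cc_pos n : (0 <= n)%Z -> coef_c bp bm dp dm c n = bp + dp.
Proof. intros; unfold coef_c; rewrite (proj2 (Z.leb_le _ _) H); auto. Qed.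
Lemma cc_m1 : coef_c bp bm dp dm c (-1) = c.
Proof. reflexivity. Qed.
Lemma cc_neg n : (n <= -2)%Z -> coef_c bp bm dp dm c n = bm + dm.
Proof. intros; unfold coef_c; rewrite (proj2 (Z.leb_gt 0 n)) by lia.
  rewrite (proj2 (Z.eqb_neq n (-1))) by lia; auto. Qed.
End Coefs.

Definition Sys (bp bm dp dm c : R) (x1 x2 x3 : Z -> R) : Prop := forall n : Z,
  coef_b bp bm n * x1 n + coef_b bp bm n * x2 n + coef_c bp bm dp dm c (n - 1) * x3 (n - 1)%Z = 0 /\
  coef_b bp bm n * x1 n + coef_d bp bm dp dm n * x2 n + coef_b bp bm n * x3 n = 0 /\
  coef_c bp bm dp dm c n * x1 (n + 1)%Z + coef_b bp bm n * x2 n + coef_b bp bm n * x3 n = 0.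

Definition dec (f : Z -> R) : Prop := forall eps, 0 < eps -> exists N : nat,
  forall m : nat, (N <= m)%nat -> Rabs (f (Z.of_nat m)) < eps /\ Rabs (f (- Z.of_nat m - 1)%Z) < eps.

Lemma site (b e cl cr mu x1 x2 x3 x3p x1n A B : R) :
  0 < b -> 0 < e -> cr <> 0 -> mu ^ 2 - Tf (e / b) * mu + 1 = 0 ->
  A = cr / e -> B = cl / e ->
  b * x1 + b * x2 + cl * x3p = 0 -> b * x1 + e * x2 + b * x3 = 0 -> cr * x1n + b * x2 + b * x3 = 0 ->
  (e / b - 1) * x3 + ((e / b) ^ 2 - mu) * A * x1n = mu * ((e / b - 1) * B * x3p + ((e / b) ^ 2 - mu) * x1).
Proof.
  intros Hb He Hcr Hmu -> -> E1 E2 E3.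
  assert (X2 : x2 = (- b * x1 - cl * x3p) / b) by (field_simplify_eq; lra).
  assert (X3 : x3 = (- b * x1 - e * x2) / b) by (field_simplify_eq; lra).
  assert (X1 : x1n = (- b * x2 - b * x3) / cr) by (field_simplify_eq; lra).
  rewrite X1. rewrite X3. rewrite X2.
  assert (EE : forall u v : R, u - v = 0 -> u = v) by (intros; lra).
  apply EE. clear EE.
  transitivity ((mu ^ 2 - Tf (e / b) * mu + 1) * x1).
  2: { rewrite Hmu; ring. }
  unfold Tf. field. repeat split; lra.
Qed.

Lemma grow0 (L : nat -> R) mu : 1 <= mu -> (forall m, L (S m) = mu * L m) ->
  (forall eps, 0 < eps -> exists m, Rabs (L m) < eps) -> L 0%nat = 0.
Proof.
  intros Hmu HL Hs.
  assert (G : forall m, Rabs (L 0%nat) <= Rabs (L m)).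
  { induction m. lra. rewrite HL, Rabs_mult, (Rabs_right mu) by lra.
    assert (0 <= Rabs (L m)) by apply Rabs_pos. nra. }
  destruct (Req_dec (L 0%nat) 0) as [|Hn]; auto.
  assert (0 < Rabs (L 0%nat)) by (apply Rabs_pos_lt; auto).
  destruct (Hs _ H) as [m Hm]. specialize (G m). lra.
Qed.

Lemma small_comb a b u v eps : 0 < eps ->
  Rabs u < eps / (Rabs a + Rabs b + 1) -> Rabs v < eps / (Rabs a + Rabs b + 1) ->
  Rabs (a * u + b * v) < eps.
Proof.
  intros He Hu Hv. set (d := eps / (Rabs a + Rabs b + 1)) in *.
  pose proof (Rabs_pos a). pose proof (Rabs_pos b).
  assert (Ed : eps = d * (Rabs a + Rabs b + 1)) by (unfold d; field; lra).
  pose proof (Rabs_triang (a * u) (b * v)). rewrite !Rabs_mult in H1.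
  pose proof (Rabs_pos u). pose proof (Rabs_pos v).
  assert (Rabs a * Rabs u <= Rabs a * d) by (apply Rmult_le_compat_l; lra).
  assert (Rabs b * Rabs v <= Rabs b * d) by (apply Rmult_le_compat_l; lra).
  nra.
Qed.

Lemma dec_comb f g a b : dec f -> dec g -> dec (fun n => a * f n + b * g n).
Proof.
  intros Hf Hg eps He.
  set (d := eps / (Rabs a + Rabs b + 1)).
  assert (0 < d) by (unfold d; apply Rdiv_lt_0_compat; [lra|]; pose proof (Rabs_pos a); pose proof (Rabs_pos b); lra).
  destruct (Hf d H) as [N1 H1]. destruct (Hg d H) as [N2 H2].
  exists (max N1 N2). intros m Hm.
  destruct (H1 m) as [A1 A2]; [lia|]. destruct (H2 m) as [B1 B2]; [lia|].
  split; apply small_comb; auto.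
Qed.


Lemma bulk_sol (b e nu iv P : R) : 0 < b -> 0 < e -> nu * iv = 1 ->
  nu ^ 2 - Tf (e / b) * nu + 1 = 0 ->
  b * ((1 - (e / b) ^ 2 * iv) * P) + b * (((e / b) * iv - 1) * P) + e * ((e / b - 1) * (iv * P)) = 0 /\
  b * ((1 - (e / b) ^ 2 * iv) * P) + e * (((e / b) * iv - 1) * P) + b * ((e / b - 1) * P) = 0 /\
  e * ((1 - (e / b) ^ 2 * iv) * (nu * P)) + b * (((e / b) * iv - 1) * P) + b * ((e / b - 1) * P) = 0.
Proof.
  intros Hb He Hi Hr.
  assert (Hnu : nu <> 0) by (intro; subst; lra).
  assert (Eiv : iv = / nu) by (field_simplify_eq; lra).
  subst iv. unfold Tf in Hr.
  repeat split.
  - field; lra.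
  - field; lra.
  - assert (E : e * ((1 - (e / b) ^ 2 * / nu) * (nu * P)) + b * ((e / b * / nu - 1) * P) + b * ((e / b - 1) * P)
        = (e / nu) * P * (nu ^ 2 - ((e / b) ^ 2 - 1 + 2 / (e / b)) * nu + 1)) by (field; lra).
    rewrite E, Hr. ring.
Qed.

Lemma geo K q : 0 <= q < 1 -> ex_series (fun m => (Cmod (RtoC (K * q ^ m))) ^ 2).
Proof.
  intros Hq.
  assert (Hg : ex_series (fun m => (q ^ 2) ^ m)).
  { eexists. apply is_series_geom. rewrite Rabs_right by (apply Rle_ge, pow2_ge_0). nra. }
  apply (ex_series_scal_l (K ^ 2)) in Hg.
  eapply ex_series_ext; [| exact Hg]. intro m. cbv beta.
  rewrite Cmod_R, pow2_abs.
  change (scal (K ^ 2) ((q ^ 2) ^ m)) with (K ^ 2 * (q ^ 2) ^ m).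
  rewrite Rpow_mult_distr, <- !pow_mult, Nat.mul_comm. reflexivity.
Qed.


Lemma Sys_lin bp bm dp dm c x1 x2 x3 y1 y2 y3 a b :
  Sys bp bm dp dm c x1 x2 x3 -> Sys bp bm dp dm c y1 y2 y3 ->
  Sys bp bm dp dm c (fun n => a * x1 n + b * y1 n) (fun n => a * x2 n + b * y2 n) (fun n => a * x3 n + b * y3 n).
Proof.
  intros Hx Hy n. destruct (Hx n) as [X1 [X2 X3]]. destruct (Hy n) as [Y1 [Y2 Y3]].
  apply (f_equal (Rmult a)) in X1, X2, X3. apply (f_equal (Rmult b)) in Y1, Y2, Y3.
  repeat split; lra.
Qed.

Section Nec.
Variables bp bm dp dm c : R.
Hypotheses (Hbp : 0 < bp) (Hbm : 0 < bm) (Hep : 0 < bp + dp) (Hem : 0 < bm + dm)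
  (Hdp : dp <> 0) (Hdm : dm <> 0) (Hc : 0 < c).

Lemma cb_gt0 n : 0 < coef_b bp bm n.
Proof. unfold coef_b; destruct (0 <=? n)%Z; lra. Qed.
Lemma cc_gt0 n : 0 < coef_c bp bm dp dm c n.
Proof. unfold coef_c; destruct (0 <=? n)%Z; [lra|]; destruct (n =? -1)%Z; lra. Qed.

Lemma tp_pos : 0 < (bp + dp) / bp.
Proof. apply Rdiv_lt_0_compat; lra. Qed.
Lemma tm_pos : 0 < (bm + dm) / bm.
Proof. apply Rdiv_lt_0_compat; lra. Qed.
Lemma tp_ne1 : (bp + dp) / bp <> 1.
Proof. intro E. apply Hdp. apply (Rmult_eq_compat_r bp) in E.
  unfold Rdiv in E. rewrite Rmult_assoc, Rinv_l in E by lra. lra. Qed.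
Lemma tm_ne1 : (bm + dm) / bm <> 1.
Proof. intro E. apply Hdm. apply (Rmult_eq_compat_r bm) in E.
  unfold Rdiv in E. rewrite Rmult_assoc, Rinv_l in E by lra. lra. Qed.

Lemma uniq0 x1 x2 x3 : Sys bp bm dp dm c x1 x2 x3 -> x3 (-1)%Z = 0 -> x1 0%Z = 0 ->
  forall n, x1 n = 0 /\ x2 n = 0 /\ x3 n = 0.
Proof.
  intros HS H3 H1.
  assert (P : forall m : nat, x3 (Z.of_nat m - 1)%Z = 0 /\ x1 (Z.of_nat m) = 0 /\
     x2 (Z.of_nat m) = 0 /\ x3 (Z.of_nat m) = 0).
  { induction m.
    - simpl. destruct (HS 0%Z) as [E1 [E2 E3]].
      pose proof (cb_gt0 0). pose proof (cc_gt0 (0 - 1)).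
      replace (0 - 1)%Z with (-1)%Z in * by lia. rewrite H3, H1 in *.
      assert (X2 : x2 0%Z = 0) by nra. rewrite X2 in *. split; auto. split; auto. split; auto. nra.
    - destruct IHm as [A1 [A2 [A3 A4]]].
      replace (Z.of_nat (S m)) with (Z.of_nat m + 1)%Z by lia.
      replace (Z.of_nat m + 1 - 1)%Z with (Z.of_nat m) by lia.
      destruct (HS (Z.of_nat m)) as [E1 [E2 E3]].
      destruct (HS (Z.of_nat m + 1)%Z) as [F1 [F2 F3]].
      replace (Z.of_nat m + 1 - 1)%Z with (Z.of_nat m) in * by lia.
      pose proof (cb_gt0 (Z.of_nat m)). pose proof (cc_gt0 (Z.of_nat m)).
      pose proof (cb_gt0 (Z.of_nat m + 1)).
      rewrite A3, A4 in E3. assert (X1 : x1 (Z.of_nat m + 1)%Z = 0) by nra.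
      rewrite X1, A4 in F1. assert (X2 : x2 (Z.of_nat m + 1)%Z = 0) by nra.
      rewrite X1, X2 in F2. split; auto. split; auto. split; auto. nra. }
  assert (Q : forall m : nat, x3 (- Z.of_nat m - 1)%Z = 0 /\ x1 (- Z.of_nat m)%Z = 0).
  { induction m.
    - simpl. auto.
    - destruct IHm as [A1 A2].
      destruct (HS (- Z.of_nat m - 1)%Z) as [E1 [E2 E3]].
      replace (- Z.of_nat m - 1 + 1)%Z with (- Z.of_nat m)%Z in * by lia.
      replace (- Z.of_nat m - 1 - 1)%Z with (- Z.of_nat (S m) - 1)%Z in * by lia.
      replace (- Z.of_nat m - 1)%Z with (- Z.of_nat (S m))%Z in * by lia.
      pose proof (cb_gt0 (- Z.of_nat (S m))). pose proof (cc_gt0 (- Z.of_nat (S m) - 1)).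
      rewrite A1, A2 in E3. assert (X2 : x2 (- Z.of_nat (S m))%Z = 0) by nra.
      rewrite A1, X2 in E2. assert (X1 : x1 (- Z.of_nat (S m))%Z = 0) by nra.
      rewrite X2, X1 in E1. split; auto. nra. }
  intro n. destruct (Z_le_gt_dec 0 n).
  - replace n with (Z.of_nat (Z.to_nat n)) by (apply Z2Nat.id; lia). apply P.
  - destruct (Q (Z.to_nat (- n - 1))) as [B1 B2].
    destruct (Q (Z.to_nat (- n))) as [C1 C2].
    replace (- Z.of_nat (Z.to_nat (- n - 1)) - 1)%Z with n in B1 by lia.
    replace (- Z.of_nat (Z.to_nat (- n)))%Z with n in C2 by lia.
    split; auto. split; auto.
    destruct (HS n) as [E1 [E2 E3]].
    replace (- Z.of_nat (Z.to_nat (- n - 1)))%Z with (n + 1)%Z in B2 by lia.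
    pose proof (cb_gt0 n). rewrite B1, B2 in E3. nra.
Qed.

Lemma nec x1 x2 x3 : Sys bp bm dp dm c x1 x2 x3 -> dec x1 -> dec x3 ->
  ((bp + dp) / bp - 1) * (c / (bp + dp)) * x3 (-1)%Z + (((bp + dp) / bp) ^ 2 - lam ((bp + dp) / bp)) * x1 0%Z = 0 /\
  ((bm + dm) / bm - 1) * x3 (-1)%Z + (((bm + dm) / bm) ^ 2 - / lam ((bm + dm) / bm)) * (c / (bm + dm)) * x1 0%Z = 0.
Proof.
  intros HS D1 D3.
  pose proof tp_pos as Tp. pose proof tm_pos as Tm. pose proof tp_ne1 as Tp1. pose proof tm_ne1 as Tm1.
  pose proof (lam_gt1 _ Tp Tp1) as Lp. pose proof (lam_gt1 _ Tm Tm1) as Lm.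
  pose proof (lam_root _ Tp Tp1) as Rp. pose proof (ilam_root _ Tm Tm1) as Rm.
  set (tp := (bp + dp) / bp) in *. set (tm := (bm + dm) / bm) in *.
  split.
  - set (L := fun m : nat => (tp - 1) * x3 (Z.of_nat m) + (tp ^ 2 - lam tp) * 1 * x1 (Z.of_nat m + 1)%Z).
    assert (L0 : L 0%nat = 0).
    { apply (grow0 L (lam tp)); [lra | |].
      - intro m. unfold L.
        replace (Z.of_nat (S m)) with (Z.of_nat m + 1)%Z by lia.
        destruct (HS (Z.of_nat m + 1)%Z) as [E1 [E2 E3]].
        replace (Z.of_nat m + 1 - 1)%Z with (Z.of_nat m) in E1 by lia.
        rewrite cb_pos in E1, E2, E3 by lia. rewrite cd_pos in E2 by lia.
        rewrite cc_pos in E1, E3 by lia.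
        assert (S0 := site bp (bp + dp) (bp + dp) (bp + dp) (lam tp) _ _ _ _ _ 1 1 Hbp Hep ltac:(lra) Rp ltac:(field; lra) ltac:(field; lra) E1 E2 E3).
        fold tp in S0. replace (Z.of_nat m + 1 + 1)%Z with (Z.of_nat m + 1 + 1)%Z by lia. lra.
      - intros eps He.
        set (d := eps / (Rabs (tp - 1) + Rabs ((tp ^ 2 - lam tp) * 1) + 1)).
        assert (Hd : 0 < d) by (unfold d; apply Rdiv_lt_0_compat; [lra|]; pose proof (Rabs_pos (tp - 1)); pose proof (Rabs_pos ((tp ^ 2 - lam tp) * 1)); lra).
        destruct (D1 d Hd) as [N1 H1]. destruct (D3 d Hd) as [N3 H3].
        exists (max N1 N3). unfold L. apply small_comb; auto.
        + apply (H3 (max N1 N3)). lia.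
        + replace (Z.of_nat (max N1 N3) + 1)%Z with (Z.of_nat (S (max N1 N3))) by lia.
          apply (H1 (S (max N1 N3))). lia. }
    destruct (HS 0%Z) as [E1 [E2 E3]].
    rewrite cb_pos in E1, E2, E3 by lia. rewrite cd_pos in E2 by lia.
    rewrite cc_pos in E3 by lia. replace (0 - 1)%Z with (-1)%Z in E1 by lia. rewrite cc_m1 in E1.
    assert (S0 := site bp (bp + dp) c (bp + dp) (lam tp) _ _ _ _ _ 1 (c / (bp + dp)) Hbp Hep ltac:(lra) Rp ltac:(field; lra) eq_refl E1 E2 E3).
    unfold L in L0. simpl Z.of_nat in L0. fold tp in S0. rewrite L0 in S0.
    apply (Rmult_eq_reg_l (lam tp)); lra.
  - set (K := fun m : nat => (tm - 1) * x3 (- Z.of_nat m - 2)%Z + (tm ^ 2 - / lam tm) * 1 * x1 (- Z.of_nat m - 1)%Z).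
    assert (K0 : K 0%nat = 0).
    { apply (grow0 K (lam tm)); [lra | |].
      - intro m. unfold K.
        destruct (HS (- Z.of_nat m - 2)%Z) as [E1 [E2 E3]].
        rewrite cb_neg in E1, E2, E3 by lia. rewrite cd_neg in E2 by lia.
        rewrite cc_neg in E1, E3 by lia.
        replace (- Z.of_nat m - 2 + 1)%Z with (- Z.of_nat m - 1)%Z in E3 by lia.
        assert (S0 := site bm (bm + dm) (bm + dm) (bm + dm) (/ lam tm) _ _ _ _ _ 1 1 Hbm Hem ltac:(lra) Rm ltac:(field; lra) ltac:(field; lra) E1 E2 E3).
        fold tm in S0. rewrite S0.
        replace (- Z.of_nat m - 2 - 1)%Z with (- Z.of_nat (S m) - 2)%Z by lia.
        replace (- Z.of_nat m - 2)%Z with (- Z.of_nat (S m) - 1)%Z by lia.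
        field; lra.
      - intros eps He.
        set (d := eps / (Rabs (tm - 1) + Rabs ((tm ^ 2 - / lam tm) * 1) + 1)).
        assert (Hd : 0 < d) by (unfold d; apply Rdiv_lt_0_compat; [lra|]; pose proof (Rabs_pos (tm - 1)); pose proof (Rabs_pos ((tm ^ 2 - / lam tm) * 1)); lra).
        destruct (D1 d Hd) as [N1 H1]. destruct (D3 d Hd) as [N3 H3].
        exists (max N1 N3). unfold K. apply small_comb; auto.
        + replace (- Z.of_nat (max N1 N3) - 2)%Z with (- Z.of_nat (S (max N1 N3)) - 1)%Z by lia.
          apply (H3 (S (max N1 N3))). lia.
        + apply (H1 (max N1 N3)). lia. }
    destruct (HS (-1)%Z) as [E1 [E2 E3]].
    rewrite cb_neg in E1, E2, E3 by lia. rewrite cd_neg in E2 by lia.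
    rewrite cc_m1 in E3. replace (-1 - 1)%Z with (-2)%Z in E1 by lia. rewrite cc_neg in E1 by lia.
    assert (S0 := site bm (bm + dm) (bm + dm) c (/ lam tm) _ _ _ _ _ (c / (bm + dm)) 1 Hbm Hem ltac:(lra) Rm eq_refl ltac:(field; lra) E1 E2 E3).
    fold tm in S0. unfold K in K0. simpl Z.of_nat in K0.
    replace (-1 + 1)%Z with 0%Z in S0 by lia.
    replace (- 0 - 2)%Z with (-2)%Z in K0 by lia. replace (- 0 - 1)%Z with (-1)%Z in K0 by lia.
    rewrite S0. rewrite Rmult_1_r in K0. rewrite Rmult_1_r. rewrite K0. ring.
Qed.

Let tp := (bp + dp) / bp.
Let tm := (bm + dm) / bm.
Let lp := lam tp.
Let lm := lam tm.
Let Rr := c * (tm - 1) * / lm.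
Let Ll := bp * tp * lp * (tp - 1).

Definition Xg (ap am : R) (n : Z) : R :=
  if (0 <=? n)%Z then ap * (/ lp) ^ (Z.to_nat n) * Rr else am * (/ lm) ^ (Z.to_nat (- n)) * Ll.

Lemma Xg_pos ap am m : Xg ap am (Z.of_nat m) = ap * (/ lp) ^ m * Rr.
Proof. unfold Xg. rewrite (proj2 (Z.leb_le _ _)) by lia. rewrite Nat2Z.id. auto. Qed.
Lemma Xg_neg ap am m : Xg ap am (- Z.of_nat m - 1)%Z = am * (/ lm) ^ (S m) * Ll.
Proof. unfold Xg. rewrite (proj2 (Z.leb_gt _ _)) by lia.
  replace (- (- Z.of_nat m - 1))%Z with (Z.of_nat (S m)) by lia. rewrite Nat2Z.id. auto. Qed.

Definition X1 := Xg (1 - tp ^ 2 * lp) (1 - tm ^ 2 * / lm).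
Definition X2 := Xg (tp * lp - 1) (tm * / lm - 1).
Definition X3 := Xg (tp - 1) (tm - 1).

Lemma facts : 0 < tp /\ 0 < tm /\ tp <> 1 /\ tm <> 1 /\ 1 < lp /\ 1 < lm /\
  lp ^ 2 - Tf tp * lp + 1 = 0 /\ (/ lp) ^ 2 - Tf tp * (/ lp) + 1 = 0 /\
  lm ^ 2 - Tf tm * lm + 1 = 0 /\ (/ lm) ^ 2 - Tf tm * (/ lm) + 1 = 0.
Proof.
  pose proof tp_pos as Tp. pose proof tm_pos as Tm. pose proof tp_ne1 as Tp1. pose proof tm_ne1 as Tm1.
  repeat split; auto.
  apply lam_gt1; auto. apply lam_gt1; auto. apply lam_root; auto. apply ilam_root; auto.
  apply lam_root; auto. apply ilam_root; auto.
Qed.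

Lemma I2_alg : (bp + dp) * (bm + dm) * gf tp * gf tm = c ^ 2 ->
  c ^ 2 * (1 - tp ^ 2 * lp) * (tm - 1) * / lm + bm * (bp * tp * lp * (tp - 1)) * / lm * (tm * / lm + tm - 2) = 0.
Proof.
  intros Hc2.
  destruct facts as [Tp [Tm [Tp1 [Tm1 [Lp [Lm [Rp [_ [Rm _]]]]]]]]].
  assert (Hc2' : c ^ 2 = bp * tp * (bm * tm) * gf tp * gf tm).
  { rewrite <- Hc2. unfold tp, tm. field; lra. }
  rewrite Hc2'.
  assert (F1 : gf tp * (1 - tp ^ 2 * lp) = lp * (tp - 1)).
  { unfold gf. fold lp.
    assert (E : (lp - tp ^ 2) * (1 - tp ^ 2 * lp) = lp * (1 - tp ^ 2 * Tf tp + tp ^ 4) + (- tp ^ 2) * (lp ^ 2 - Tf tp * lp + 1)) by ring.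
    rewrite Rp, Rmult_0_r, Rplus_0_r in E.
    assert (E2 : 1 - tp ^ 2 * Tf tp + tp ^ 4 = (tp - 1) ^ 2) by (unfold Tf; field; lra).
    rewrite E2 in E.
    replace ((lp - tp ^ 2) / (tp - 1) * (1 - tp ^ 2 * lp)) with ((lp - tp ^ 2) * (1 - tp ^ 2 * lp) / (tp - 1)) by (field; lra).
    rewrite E. field; lra. }
  assert (F2 : tm * gf tm * (tm - 1) = tm * (lm - tm ^ 2)).
  { unfold gf. fold lm. field; lra. }
  assert (F3 : tm * (lm + / lm) - tm ^ 3 + tm - 2 = 0).
  { assert (E : lm + / lm = Tf tm).
    { apply (Rmult_eq_reg_l lm); [| lra]. field_simplify; [| lra]. lra. }
    rewrite E. unfold Tf. field; lra. }
  replace (bp * tp * (bm * tm) * gf tp * gf tm * (1 - tp ^ 2 * lp) * (tm - 1) * / lm)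
    with (bp * tp * bm * / lm * (gf tp * (1 - tp ^ 2 * lp)) * (tm * gf tm * (tm - 1))) by ring.
  rewrite F1, F2.
  replace (bp * tp * bm * / lm * (lp * (tp - 1)) * (tm * (lm - tm ^ 2)) +
     bm * (bp * tp * lp * (tp - 1)) * / lm * (tm * / lm + tm - 2))
    with (bp * bm * tp * lp * (tp - 1) * / lm * (tm * (lm + / lm) - tm ^ 3 + tm - 2)) by ring.
  rewrite F3. ring.
Qed.

Lemma X_sys : (bp + dp) * (bm + dm) * gf tp * gf tm = c ^ 2 -> Sys bp bm dp dm c X1 X2 X3.
Proof.
  intros Hc2. pose proof (I2_alg Hc2) as I2.
  destruct facts as [Tp [Tm [Tp1 [Tm1 [Lp [Lm [Rp [Rp' [Rm Rm']]]]]]]]].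
  assert (Lp0 : lp <> 0) by lra. assert (Lm0 : lm <> 0) by lra.
  unfold X1, X2, X3. intro n.
  destruct (Z_le_gt_dec 1 n) as [H1|H1]; [| destruct (Z.eq_dec n 0) as [H0|H0];
     [| destruct (Z.eq_dec n (-1)) as [Hm1|Hm1]]].
  -
    destruct (bulk_sol bp (bp + dp) (/ lp) lp ((/ lp) ^ (Z.to_nat n) * Rr) Hbp Hep ltac:(field; lra) Rp') as [B1 [B2 B3]].
    set (m := Z.to_nat (n - 1)).
    assert (En : n = Z.of_nat (S m)) by (unfold m; lia).
    rewrite cb_pos, cd_pos, cc_pos, cc_pos by lia.
    replace (n - 1)%Z with (Z.of_nat m) by lia. replace (n + 1)%Z with (Z.of_nat (S (S m))) by lia.
    rewrite En in *. rewrite Nat2Z.id in B1, B2, B3. rewrite !Xg_pos.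
    fold tp in B1, B2, B3.
    repeat split.
    + eapply eq_trans; [| exact B1]. simpl pow. field; lra.
    + eapply eq_trans; [| exact B2]. field; lra.
    + eapply eq_trans; [| exact B3]. simpl pow. field; lra.
  -
    subst n.
    destruct (bulk_sol bp (bp + dp) (/ lp) lp Rr Hbp Hep ltac:(field; lra) Rp') as [B1 [B2 B3]].
    replace (0 - 1)%Z with (-1)%Z by lia. rewrite cc_m1.
    rewrite cb_pos, cd_pos, cc_pos by lia.
    replace (-1)%Z with (- Z.of_nat 0 - 1)%Z by lia.
    replace (0 + 1)%Z with (Z.of_nat 1) by lia. replace 0%Z with (Z.of_nat 0) by lia.
    rewrite !Xg_pos, !Xg_neg. fold tp in B1, B2, B3.
    repeat split.
    + unfold Rr, Ll. simpl pow. field; lra.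
    + eapply eq_trans; [| exact B2]. simpl pow. field; lra.
    + eapply eq_trans; [| exact B3]. simpl pow. field; lra.
  -
    subst n.
    destruct (bulk_sol bm (bm + dm) lm (/ lm) (/ lm * Ll) Hbm Hem ltac:(field; lra) Rm) as [B1 [B2 B3]].
    rewrite cb_neg, cd_neg by lia. rewrite cc_m1. rewrite cc_neg by lia.
    replace (-1 - 1)%Z with (- Z.of_nat 1 - 1)%Z by lia.
    replace (-1 + 1)%Z with (Z.of_nat 0) by lia. replace (-1)%Z with (- Z.of_nat 0 - 1)%Z by lia.
    rewrite !Xg_pos, !Xg_neg. fold tm in B1, B2, B3.
    repeat split.
    + eapply eq_trans; [| exact B1]. simpl pow. field; lra.
    + eapply eq_trans; [| exact B2]. simpl pow. field; lra.
    + eapply eq_trans; [| exact I2]. unfold Rr, Ll. simpl pow. field; lra.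
  -
    set (m := Z.to_nat (- n - 2)).
    assert (En : n = (- Z.of_nat (S m) - 1)%Z) by (unfold m; lia).
    destruct (bulk_sol bm (bm + dm) lm (/ lm) ((/ lm) ^ (S (S m)) * Ll) Hbm Hem ltac:(field; lra) Rm) as [B1 [B2 B3]].
    rewrite cb_neg, cd_neg, cc_neg, cc_neg by lia.
    replace (n - 1)%Z with (- Z.of_nat (S (S m)) - 1)%Z by lia.
    replace (n + 1)%Z with (- Z.of_nat m - 1)%Z by lia.
    rewrite En. rewrite !Xg_neg. fold tm in B1, B2, B3.
    repeat split.
    + eapply eq_trans; [| exact B1]. simpl pow. field; lra.
    + eapply eq_trans; [| exact B2]. simpl pow. field; lra.
    + eapply eq_trans; [| exact B3]. simpl pow. field; lra.
Qed.

Lemma ilt1 l : 1 < l -> 0 <= / l < 1.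
Proof. intros. split. left; apply Rinv_0_lt_compat; lra.
  apply (Rmult_lt_reg_l l); [lra|]. rewrite Rinv_r; lra. Qed.

Lemma Xg_l2 ap am : ex_series (fun m => Cmod (RtoC (Xg ap am (Z.of_nat m))) ^ 2) /\
  ex_series (fun m => Cmod (RtoC (Xg ap am (- Z.of_nat m - 1)%Z)) ^ 2).
Proof.
  destruct facts as [Tp [Tm [Tp1 [Tm1 [Lp [Lm _]]]]]].
  split.
  - eapply ex_series_ext; [| apply (geo (ap * Rr) (/ lp) (ilt1 _ Lp))].
    intro m. cbv beta. rewrite Xg_pos. replace (ap * (/ lp) ^ m * Rr) with (ap * Rr * (/ lp) ^ m) by ring. auto.
  - eapply ex_series_ext; [| apply (geo (am * / lm * Ll) (/ lm) (ilt1 _ Lm))].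
    intro m. cbv beta. rewrite Xg_neg. replace (am * (/ lm) ^ S m * Ll) with (am * / lm * Ll * (/ lm) ^ m) by (simpl; ring). auto.
Qed.

Lemma X3m1 : X3 (-1)%Z <> 0.
Proof.
  destruct facts as [Tp [Tm [Tp1 [Tm1 [Lp [Lm _]]]]]].
  unfold X3. replace (-1)%Z with (- Z.of_nat 0 - 1)%Z by lia. rewrite Xg_neg. unfold Ll.
  assert (tm - 1 <> 0) by lra. assert (tp - 1 <> 0) by lra.
  assert ((/ lm) ^ 1 <> 0) by (apply pow_nonzero; apply Rinv_neq_0_compat; lra).
  assert (HL : bp * tp * lp * (tp - 1) <> 0).
  { apply Rmult_integral_contrapositive_currified; [apply Rmult_integral_contrapositive_currified; [apply Rmult_integral_contrapositive_currified|]|]; lra. }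
  apply Rmult_integral_contrapositive_currified; [apply Rmult_integral_contrapositive_currified|]; auto.
Qed.

Lemma tp2_ne : tp ^ 2 - lp <> 0.
Proof.
  destruct facts as [Tp [Tm [Tp1 [Tm1 [Lp [Lm _]]]]]].
  pose proof (key_id tp Tp Tp1). fold lp in H. intro E. rewrite E in H.
  assert (tp - 1 <> 0) by lra. assert (0 < (tp - 1) ^ 2) by nra. lra.
Qed.

Lemma span_real : (bp + dp) * (bm + dm) * gf tp * gf tm = c ^ 2 ->
  dec X1 -> dec X3 -> forall y1 y2 y3, Sys bp bm dp dm c y1 y2 y3 -> dec y1 -> dec y3 ->
  exists k, forall n, y1 n = k * X1 n /\ y2 n = k * X2 n /\ y3 n = k * X3 n.
Proof.
  intros Hc2 D1 D3 y1 y2 y3 HS E1 E3.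
  set (k := y3 (-1)%Z / X3 (-1)%Z). exists k.
  pose proof (Sys_lin _ _ _ _ _ _ _ _ _ _ _ 1 (- k) HS (X_sys Hc2)) as HZ.
  destruct (nec _ _ _ HZ (dec_comb _ _ 1 (- k) E1 D1) (dec_comb _ _ 1 (- k) E3 D3)) as [N1 _].
  fold tp lp in N1.
  assert (Z3 : 1 * y3 (-1)%Z + - k * X3 (-1)%Z = 0) by (unfold k; pose proof X3m1; field; auto).
  rewrite Z3 in N1. rewrite Rmult_0_r, Rplus_0_l in N1.
  assert (Z1 : 1 * y1 0%Z + - k * X1 0%Z = 0).
  { apply Rmult_integral in N1. destruct N1; auto. exfalso; apply tp2_ne; auto. }
  intro n. destruct (uniq0 _ _ _ HZ Z3 Z1 n) as [A1 [A2 A3]]. cbv beta in A1, A2, A3.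
  repeat split; lra.
Qed.

Lemma zero_real : (bp + dp) * (bm + dm) * gf tp * gf tm <> c ^ 2 ->
  forall y1 y2 y3, Sys bp bm dp dm c y1 y2 y3 -> dec y1 -> dec y3 ->
  forall n, y1 n = 0 /\ y2 n = 0 /\ y3 n = 0.
Proof.
  intros Hc2 y1 y2 y3 HS E1 E3.
  destruct facts as [Tp [Tm [Tp1 [Tm1 [Lp [Lm _]]]]]].
  destruct (nec _ _ _ HS E1 E3) as [N1 N2]. fold tp tm lp lm in N1, N2.
  set (p := y3 (-1)%Z) in *. set (q := y1 0%Z) in *.
  set (al := (tp - 1) * (c / (bp + dp))) in *. set (be := tp ^ 2 - lp) in *.
  set (ga := tm - 1) in *. set (de := (tm ^ 2 - / lm) * (c / (bm + dm))) in *.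
  assert (Hdet : al * de - be * ga <> 0).
  { intro Hd. apply Hc2.
    pose proof (key_id tm Tm Tm1) as K. fold lm in K.
    assert (Hm2 : tm ^ 2 - lm <> 0).
    { intro E. rewrite E in K. assert (tm - 1 <> 0) by lra. assert (0 < (tm - 1) ^ 2) by nra. lra. }
    assert (Ed : tm ^ 2 - / lm = (tm - 1) ^ 2 / (tm ^ 2 - lm)) by (rewrite <- K; field; split; lra).
    unfold al, be, ga, de in Hd. rewrite Ed in Hd.
    assert (E' : c ^ 2 * ((tp - 1) * (tm - 1) ^ 2) = (tp ^ 2 - lp) * (tm - 1) * ((bp + dp) * (bm + dm) * (tm ^ 2 - lm))).
    { replace (c ^ 2 * ((tp - 1) * (tm - 1) ^ 2)) with
        ((tp - 1) * (c / (bp + dp)) * ((tm - 1) ^ 2 / (tm ^ 2 - lm) * (c / (bm + dm))) * ((bp + dp) * (bm + dm) * (tm ^ 2 - lm)))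
        by (field; repeat split; lra).
      replace ((tp - 1) * (c / (bp + dp)) * ((tm - 1) ^ 2 / (tm ^ 2 - lm) * (c / (bm + dm))))
        with ((tp ^ 2 - lp) * (tm - 1)) by lra. ring. }
    assert (Hnz : (tp - 1) * (tm - 1) ^ 2 <> 0).
    { apply Rmult_integral_contrapositive_currified. lra. apply pow_nonzero. lra. }
    apply (Rmult_eq_reg_r ((tp - 1) * (tm - 1) ^ 2)); auto.
    rewrite E'. unfold gf. fold lp lm. field. split; lra. }
  apply uniq0; auto.

  - change (p = 0). apply (Rmult_eq_reg_l (al * de - be * ga)); auto.
    transitivity (de * (al * p + be * q) - be * (ga * p + de * q)); [ring|]. rewrite N1, N2; ring.
  - change (q = 0). apply (Rmult_eq_reg_l (al * de - be * ga)); auto.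
    transitivity (al * (ga * p + de * q) - ga * (al * p + be * q)); [ring|]. rewrite N1, N2; ring.
Qed.
End Nec.


Definition emb (x1 x2 x3 y1 y2 y3 : Z -> R) : seq6 := fun n j =>
  match j with
  | j1 => RtoC (x1 n) | j2 => RtoC (x2 n) | j3 => RtoC (x3 n)
  | j4 => RtoC (y1 n) | j5 => RtoC (y2 n) | j6 => RtoC (y3 n)
  end.

Lemma eig_emb bp bm dp dm c x1 x2 x3 y1 y2 y3 :
  Sys bp bm dp dm c x1 x2 x3 -> Sys bp bm dp dm c y1 y2 y3 ->
  forall n j, H_I bp bm dp dm c 0 (emb y1 y2 y3 x1 x2 x3) n j = Cmult 0%C (emb y1 y2 y3 x1 x2 x3 n j).
Proof.
  intros Hx Hy n j. destruct (Hx n) as [X1 [X2 X3]]. destruct (Hy n) as [Y1 [Y2 Y3]].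
  destruct j; unfold H_I, emb, Cmult, Cplus, Copp, RtoC, eik, emik; repeat rewrite cos_0; repeat rewrite sin_0; cbn [fst snd];
   f_equal; lra.
Qed.

Lemma extract bp bm dp dm c (u : seq6) :
  (forall n j, H_I bp bm dp dm c 0 u n j = Cmult 0%C (u n j)) ->
  Sys bp bm dp dm c (fun n => fst (u n j1)) (fun n => fst (u n j2)) (fun n => fst (u n j3)) /\
  Sys bp bm dp dm c (fun n => snd (u n j1)) (fun n => snd (u n j2)) (fun n => snd (u n j3)) /\
  Sys bp bm dp dm c (fun n => fst (u n j4)) (fun n => fst (u n j5)) (fun n => fst (u n j6)) /\
  Sys bp bm dp dm c (fun n => snd (u n j4)) (fun n => snd (u n j5)) (fun n => snd (u n j6)).
Proof.
  intros HE.
  repeat split;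
  [ pose proof (HE n j4) as E | pose proof (HE n j5) as E | pose proof (HE n (j6)) as E
  | pose proof (HE n j4) as E | pose proof (HE n j5) as E | pose proof (HE n (j6)) as E
  | pose proof (HE n j1) as E | pose proof (HE n j2) as E | pose proof (HE n (j3)) as E
  | pose proof (HE n j1) as E | pose proof (HE n j2) as E | pose proof (HE n (j3)) as E ];
  unfold H_I, Cmult, Cplus, Copp, RtoC, eik, emik in E; repeat rewrite cos_0 in E; repeat rewrite sin_0 in E;
  first [ apply (f_equal fst) in E; cbn [fst snd] in E; lra | apply (f_equal snd) in E; cbn [fst snd] in E; lra ].
Qed.

Lemma series_small (f : nat -> C) : ex_series (fun m => (Cmod (f m)) ^ 2) ->
  forall eps, 0 < eps -> exists N, forall m, (N <= m)%nat -> Rabs (fst (f m)) < eps /\ Rabs (snd (f m)) < eps.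
Proof.
  intros H eps He.
  apply ex_series_lim_0 in H. apply is_lim_seq_spec in H.
  assert (He2 : 0 < eps ^ 2) by nra.
  destruct (H (mkposreal _ He2)) as [N HN]. exists N. intros m Hm.
  specialize (HN m Hm). simpl in HN. rewrite Rminus_0_r in HN.
  pose proof (Cmod_ge_0 (f m)).
  rewrite Rabs_right in HN by (apply Rle_ge; apply pow2_ge_0).
  assert (Cmod (f m) < eps) by nra.
  pose proof (Rmax_Cmod (f m)). pose proof (Rmax_l (Rabs (fst (f m))) (Rabs (snd (f m)))).
  pose proof (Rmax_r (Rabs (fst (f m))) (Rabs (snd (f m)))). lra.
Qed.

Lemma l2_dec (u : seq6) j : in_l2 u -> dec (fun n => fst (u n j)) /\ dec (fun n => snd (u n j)).
Proof.
  intros Hl. destruct (Hl j) as [P N].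
  split; intros eps He;
  destruct (series_small _ P eps He) as [N1 H1]; destruct (series_small _ N eps He) as [N2 H2];
  exists (max N1 N2); intros m Hm; (split; [apply H1 | apply H2]; lia).
Qed.

Definition zf : Z -> R := fun _ => 0.

Lemma Sys_zero bp bm dp dm c : Sys bp bm dp dm c zf zf zf.
Proof. intro n; unfold zf; repeat split; ring. Qed.

Definition okf (f : Z -> R) : Prop :=
  ex_series (fun m => (Cmod (RtoC (f (Z.of_nat m)))) ^ 2) /\
  ex_series (fun m => (Cmod (RtoC (f (- Z.of_nat m - 1)%Z))) ^ 2).

Lemma okf_zero : okf zf.
Proof.
  unfold okf, zf. split; (eapply ex_series_ext; [| apply (geo 0 0); lra]);
  intro m; cbv beta; rewrite Rmult_0_l; auto.
Qed.

Lemma in_l2_emb x1 x2 x3 y1 y2 y3 : okf x1 -> okf x2 -> okf x3 -> okf y1 -> okf y2 -> okf y3 ->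
  in_l2 (emb x1 x2 x3 y1 y2 y3).
Proof. intros H1 H2 H3 H4 H5 H6 j; destruct j; assumption. Qed.

Lemma ind_a (a b : C) (x : R) : x <> 0 -> Cplus (Cmult a (RtoC x)) (Cmult b (RtoC 0)) = RtoC 0 -> a = RtoC 0.
Proof.
  intros Hx H. destruct a as [a1 a2]. destruct b as [b1 b2].
  unfold Cmult, Cplus, RtoC in H. cbn [fst snd] in H. injection H as H1 H2.
  assert (E1 : a1 * x = 0) by lra. assert (E2 : a2 * x = 0) by lra.
  apply Rmult_integral in E1. apply Rmult_integral in E2. unfold RtoC.
  destruct E1; [|contradiction]. destruct E2; [|contradiction]. subst; auto.
Qed.

Lemma ind_b (a b : C) (x : R) : x <> 0 -> Cplus (Cmult a (RtoC 0)) (Cmult b (RtoC x)) = RtoC 0 -> b = RtoC 0.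
Proof.
  intros Hx H. destruct a as [a1 a2]. destruct b as [b1 b2].
  unfold Cmult, Cplus, RtoC in H. cbn [fst snd] in H. injection H as H1 H2.
  assert (E1 : b1 * x = 0) by lra. assert (E2 : b2 * x = 0) by lra.
  apply Rmult_integral in E1. apply Rmult_integral in E2. unfold RtoC.
  destruct E1; [|contradiction]. destruct E2; [|contradiction]. subst; auto.
Qed.

Theorem theorem9 (bp bm dp dm c : R) :
  0 < bp -> 0 < bm -> 0 < bp + dp -> 0 < bm + dm ->
  dp <> 0 -> dm <> 0 -> 0 < c ->
  (twofold_eigenvalue (H_I bp bm dp dm c 0) 0%C <->
   (bp + dp) * (bm + dm) * f1 bp dp * f1 bm dm = c ^ 2).
Proof.
  intros Hbp Hbm Hep Hem Hdp Hdm Hc.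
  rewrite (f1_eq bp dp Hbp Hep Hdp), (f1_eq bm dm Hbm Hem Hdm).
  split.
  - intros [u [v [Eu [Ev [Hind _]]]]].
    destruct (Req_dec ((bp + dp) * (bm + dm) * gf ((bp + dp) / bp) * gf ((bm + dm) / bm)) (c ^ 2)) as [HC|HC];
      auto. exfalso.
    assert (Z : forall w, eigvec (H_I bp bm dp dm c 0) 0%C w -> forall n j, w n j = RtoC 0).
    { intros w [Hl He].
      destruct (extract _ _ _ _ _ _ He) as [S1 [S2 [S3 S4]]].
      destruct (l2_dec w j1 Hl) as [D1 D1']. destruct (l2_dec w j3 Hl) as [D3 D3'].
      destruct (l2_dec w j4 Hl) as [D4 D4']. destruct (l2_dec w j6 Hl) as [D6 D6'].
      intros n j.
      pose proof (zero_real _ _ _ _ _ Hbp Hbm Hep Hem Hdp Hdm Hc HC _ _ _ S1 D1 D3 n) as Z1.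
      pose proof (zero_real _ _ _ _ _ Hbp Hbm Hep Hem Hdp Hdm Hc HC _ _ _ S2 D1' D3' n) as Z2.
      pose proof (zero_real _ _ _ _ _ Hbp Hbm Hep Hem Hdp Hdm Hc HC _ _ _ S3 D4 D6 n) as Z3.
      pose proof (zero_real _ _ _ _ _ Hbp Hbm Hep Hem Hdp Hdm Hc HC _ _ _ S4 D4' D6' n) as Z4.
      cbv beta in Z1, Z2, Z3, Z4. unfold RtoC.
      destruct j; apply injective_projections; cbn [fst snd]; tauto. }
    assert (H0 : forall n j, lincomb2 1%C 0%C u v n j = 0%C).
    { intros n j. unfold lincomb2. rewrite (Z u Eu), (Z v Ev).
      unfold Cmult, Cplus, RtoC. cbn [fst snd]. apply injective_projections; cbn [fst snd]; ring. }
    destruct (Hind _ _ H0) as [H1 _]. apply (f_equal fst) in H1. unfold RtoC in H1. cbn [fst] in H1. lra.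
  - intro HC.
    pose proof (X_sys _ _ _ _ _ Hbp Hbm Hep Hem Hdp Hdm HC) as SX.
    assert (O1 : okf (X1 bp bm dp dm c)) by (apply Xg_l2; auto).
    assert (O2 : okf (X2 bp bm dp dm c)) by (apply Xg_l2; auto).
    assert (O3 : okf (X3 bp bm dp dm c)) by (apply Xg_l2; auto).
    set (u := emb (X1 bp bm dp dm c) (X2 bp bm dp dm c) (X3 bp bm dp dm c) zf zf zf).
    set (v := emb zf zf zf (X1 bp bm dp dm c) (X2 bp bm dp dm c) (X3 bp bm dp dm c)).
    assert (Lu : in_l2 u) by (apply in_l2_emb; auto using okf_zero).
    assert (Lv : in_l2 v) by (apply in_l2_emb; auto using okf_zero).
    assert (DX1 : dec (X1 bp bm dp dm c)) by exact (proj1 (l2_dec u j1 Lu)).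
    assert (DX3 : dec (X3 bp bm dp dm c)) by exact (proj1 (l2_dec u j3 Lu)).
    exists u, v. split; [| split; [| split]].
    + split; auto. apply eig_emb; auto. apply Sys_zero.
    + split; auto. apply eig_emb; auto. apply Sys_zero.
    + intros a b Hab. pose proof (X3m1 _ _ _ _ c Hbp Hbm Hep Hem Hdp Hdm) as Hx.
      split.
      * apply (ind_a a b (X3 bp bm dp dm c (-1)%Z)); auto. apply (Hab (-1)%Z j3).
      * apply (ind_b a b (X3 bp bm dp dm c (-1)%Z)); auto. apply (Hab (-1)%Z j6).
    + intros w [Hl He].
      destruct (extract _ _ _ _ _ _ He) as [S1 [S2 [S3 S4]]].
      destruct (l2_dec w j1 Hl) as [D1 D1']. destruct (l2_dec w j3 Hl) as [D3 D3'].
      destruct (l2_dec w j4 Hl) as [D4 D4']. destruct (l2_dec w j6 Hl) as [D6 D6'].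
      destruct (span_real _ _ _ _ _ Hbp Hbm Hep Hem Hdp Hdm Hc HC DX1 DX3 _ _ _ S1 D1 D3) as [k1 K1].
      destruct (span_real _ _ _ _ _ Hbp Hbm Hep Hem Hdp Hdm Hc HC DX1 DX3 _ _ _ S2 D1' D3') as [k2 K2].
      destruct (span_real _ _ _ _ _ Hbp Hbm Hep Hem Hdp Hdm Hc HC DX1 DX3 _ _ _ S3 D4 D6) as [k3 K3].
      destruct (span_real _ _ _ _ _ Hbp Hbm Hep Hem Hdp Hdm Hc HC DX1 DX3 _ _ _ S4 D4' D6') as [k4 K4].
      exists (k1, k2), (k3, k4). intros n j.
      destruct (K1 n) as [A1 [A2 A3]]. destruct (K2 n) as [B1 [B2 B3]].
      destruct (K3 n) as [C1 [C2 C3]]. destruct (K4 n) as [E1 [E2 E3]].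
      unfold lincomb2, u, v, emb, zf, Cmult, Cplus, RtoC.
      destruct j; apply injective_projections; cbn [fst snd]; lra.
Qed.
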